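(* For $t\in\{0,\delta,\dots,T\}$ let $v^t$ be the value function at time $t$ and $v_h^t$ its approximation given by the ideal max-plus finite element method. Then \[ \|v_h^T-v^T\|_\infty\leq\|P_{\mathcal W_h}(v^0)-v^0\|_\infty+\sum_{t\in\{\delta,2\delta,\dots,T\}}\|P_{\mathcal W_h}(P^{-\mathcal Z_h}(v^t))-v^t\|_\infty. \]
   Context: Optimal control setting: $X\subseteq\mathbb{R}^n$, $U\subseteq\mathbb{R}^m$, $\ell:X\times U\to\mathbb R$, $f:X\times U\to\mathbb{R}^n$, $T>0$, $\phi:X\to\mathbb{R}\cup\{-\infty\}$. For $t\ge0$ and $g:X\to\overline{\mathbb R}$, $S^tg(x)=\sup\{\int_0^t\ell(\mathbf x(s),\mathbf u(s))ds+g(\mathbf x(t))\}$ over measurable $\mathbf u:[0,t]\to U$ and absolutely continuous $\mathbf x:[0,t]\to X$ with $\dot{\mathbf x}=f(\mathbf x,\mathbf u)$ a.e. and $\mathbf x(0)=x$; value function $v^t=S^t\phi$. Arithmetic in $\overline{\mathbb R}=\mathbb{R}\cup\{\pm\infty\}$ with $-\infty$ absorbing for $+$; $a\backslash b=\max\{\lambda\in\overline{\mathbb{R}}:a+\lambda\leq b\}$. $\langle u,v\rangle=\sup_{x\in X}(u(x)+v(x))$. Finite elements $w_1,\dots,w_p$ and test functions $z_1,\dots,z_q$, functions $X\to\mathbb{R}\cup\{-\infty\}$. $W_h\lambda=\sup_i(w_i+\lambda_i)$; $(W_h\backslash g)_i=\inf_{x\in X}(w_i(x)\backslash g(x))$;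 $P_{\mathcal W_h}g=W_h(W_h\backslash g)$; $P^{-\mathcal Z_h}g(x)=\min_j\big(z_j(x)\backslash\langle z_j,g\rangle\big)$. For a matrix $A$: $(A\lambda)_j=\max_k(A_{jk}+\lambda_k)$, $(A\backslash\mu)_i=\min_jA_{ji}\backslash\mu_j$. Ideal max-plus finite element method: $N\geq1$, $\delta=T/N$, $(M_h)_{ji}=\langle z_j,w_i\rangle$, $(K_h)_{ji}=\langle z_j,S^\delta w_i\rangle$, $\lambda^0=W_h\backslash\phi$, $\lambda^{t+\delta}=M_h\backslash(K_h\lambda^t)$ for $t=0,\dots,T-\delta$, $v_h^t=W_h\lambda^t$. For $u,v:X\to\overline{\mathbb R}$, $\|u-v\|_\infty=\inf\{\lambda\geq0: v-\lambda\leq u\leq v+\lambda\}$ (equal to $\sup_{x}|u(x)-v(x)|$ when $u-v$ is finite-valued, $+\infty$ if no such $\lambda$). *)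

(* Defs.v *)
From HB Require Import structures.
From mathcomp Require Import all_boot all_order all_algebra.
From mathcomp Require Import all_classical all_reals all_analysis.
Set Implicit Arguments. Unset Strict Implicit. Unset Printing Implicit Defensive.
Import Order.TTheory GRing.Theory Num.Theory.
Import numFieldNormedType.Exports.
Local Open Scope classical_set_scope.
Local Open Scope ring_scope.
Local Open Scope ereal_scope.

Section MaxPlus.
Variable R : realType.

Definition eres (a b : \bar R) : \bar R := ereal_sup [set l | a + l <= b].

Definition abs_cont_on (n : nat) (a b : R) (x : R -> 'rV[R]_n) : Prop :=
  forall e : R, (0 < e)%R -> exists2 d : R, (0 < d)%R &
    forall (K : nat) (al bl : nat -> R),
      (forall k, (k < K)%N -> (a <= al k)%R /\ (al k <= bl k)%R /\ (bl k <= b)%R) ->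
      (forall i j, (i < K)%N -> (j < K)%N -> i <> j ->
          (bl i <= al j)%R \/ (bl j <= al i)%R) ->
      (\sum_(k < K) (bl k - al k) < d)%R ->
      (\sum_(k < K) `| x (bl k) - x (al k) | < e)%R.

Definition admissible (n m : nat) (X : set 'rV[R]_n) (U : set 'rV[R]_m)
    (f : 'rV[R]_n -> 'rV[R]_m -> 'rV[R]_n) (t : R) (x0 : 'rV[R]_n)
    (u : R -> 'rV[R]_m) (x : R -> 'rV[R]_n) : Prop :=
  (forall s, `[0%R, t]%classic s -> U (u s)) /\
  (forall i : 'I_m, measurable_fun `[0%R, t] (fun s => u s ord0 i)) /\
  (forall s, `[0%R, t]%classic s -> X (x s)) /\
  abs_cont_on 0%R t x /\
  {ae (@lebesgue_measure R), forall s, `[0%R, t]%classic s ->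
      is_derive s 1%R x (f (x s) (u s))} /\
  x 0%R = x0.

Definition Sop (n m : nat) (X : set 'rV[R]_n) (U : set 'rV[R]_m)
    (l : 'rV[R]_n -> 'rV[R]_m -> R) (f : 'rV[R]_n -> 'rV[R]_m -> 'rV[R]_n)
    (t : R) (g : 'rV[R]_n -> \bar R) (x0 : 'rV[R]_n) : \bar R :=
  ereal_sup [set (\int[@lebesgue_measure R]_(s in `[0%R, t]) (l (uxs.2 s) (uxs.1 s))%:E)
                   + g (uxs.2 t)
            | uxs in [set uxs : (R -> 'rV[R]_m) * (R -> 'rV[R]_n) |
                       admissible X U f t x0 uxs.1 uxs.2] ].

Definition mp_dot (n : nat) (X : set 'rV[R]_n) (u v : 'rV[R]_n -> \bar R) : \bar R :=
  ereal_sup [set u x + v x | x in X].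

Definition sup_dist (n : nat) (X : set 'rV[R]_n) (u v : 'rV[R]_n -> \bar R) : \bar R :=
  ereal_inf [set l%:E | l in [set l : R | (0 <= l)%R /\
     forall x, X x -> v x - l%:E <= u x /\ u x <= v x + l%:E]].

Definition Wmap (n p : nat) (w : 'I_p -> 'rV[R]_n -> \bar R) (lam : 'I_p -> \bar R)
  : 'rV[R]_n -> \bar R := fun x => \big[maxe/-oo]_(i < p) (w i x + lam i).

Definition Wres (n p : nat) (X : set 'rV[R]_n) (w : 'I_p -> 'rV[R]_n -> \bar R)
  (g : 'rV[R]_n -> \bar R) : 'I_p -> \bar R :=
  fun i => ereal_inf [set eres (w i x) (g x) | x in X].

Definition PW (n p : nat) (X : set 'rV[R]_n) (w : 'I_p -> 'rV[R]_n -> \bar R)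
  (g : 'rV[R]_n -> \bar R) : 'rV[R]_n -> \bar R := Wmap w (Wres X w g).

Definition PmZ (n q : nat) (X : set 'rV[R]_n) (z : 'I_q -> 'rV[R]_n -> \bar R)
  (g : 'rV[R]_n -> \bar R) : 'rV[R]_n -> \bar R :=
  fun x => \big[mine/+oo]_(j < q) eres (z j x) (mp_dot X (z j) g).

Definition mp_mul (q p : nat) (A : 'I_q -> 'I_p -> \bar R) (lam : 'I_p -> \bar R)
  : 'I_q -> \bar R := fun j => \big[maxe/-oo]_(k < p) (A j k + lam k).

Definition mp_res (q p : nat) (A : 'I_q -> 'I_p -> \bar R) (mu : 'I_q -> \bar R)
  : 'I_p -> \bar R := fun i => \big[mine/+oo]_(j < q) eres (A j i) (mu j).

Fixpoint mpfem_lambda (n m p q : nat) (X : set 'rV[R]_n) (U : set 'rV[R]_m)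
    (l : 'rV[R]_n -> 'rV[R]_m -> R) (f : 'rV[R]_n -> 'rV[R]_m -> 'rV[R]_n)
    (delta : R) (phi : 'rV[R]_n -> \bar R)
    (w : 'I_p -> 'rV[R]_n -> \bar R) (z : 'I_q -> 'rV[R]_n -> \bar R)
    (k : nat) : 'I_p -> \bar R :=
  match k with
  | 0%N => Wres X w phi
  | k'.+1 =>
      let Mh := fun j i => mp_dot X (z j) (w i) in
      let Kh := fun j i => mp_dot X (z j) (Sop X U l f delta (w i)) in
      mp_res Mh (mp_mul Kh (mpfem_lambda X U l f delta phi w z k'))
  end.

End MaxPlus.

(* Main.v *)
From mathcomp Require Import ring.
From mathcomp Require Import lra.
Require Import Defs.
From HB Require Import structures.
From mathcomp Require Import all_boot all_order all_algebra.
From mathcomp Require Import all_classical all_reals all_analysis.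
Import Order.TTheory GRing.Theory Num.Theory.
Import numFieldNormedType.Exports.
Set Implicit Arguments. Unset Strict Implicit. Unset Printing Implicit Defensive.
Local Open Scope classical_set_scope.
Local Open Scope ring_scope.
Local Open Scope ereal_scope.
Section A.
Context {R : realType}.
Implicit Types (a b c l : \bar R) (S : set (\bar R)).

Lemma adde_sup_le a S c : (forall s, S s -> a + s <= c) -> a + ereal_sup S <= c.
Proof.
case: a => [r| |] H.
- case: c H => [c| |] H; last 2 first.
  + by rewrite leey.
  + have -> : ereal_sup S = -oo.
      apply/ereal_sup_ninfty => s Ss; have := H s Ss.
      by case: s {Ss} => [s| |] //=; rewrite leeNy_eq.
    by [].
  + have : ereal_sup S <= (c - r)%:E.
      apply: ge_ereal_sup => s Ss; have := H s Ss.
      case: s {Ss} => [s| |] //; rewrite ?leNye // => hs.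
      by rewrite lee_fin; rewrite -EFinD lee_fin in hs; lra.

    case: (ereal_sup S) => [u| |] //; last by move=> _; rewrite addeNy leNye.
    by move=> hu; rewrite -EFinD lee_fin; rewrite lee_fin in hu; lra.
- have [->|] := eqVneq (ereal_sup S) -oo; first by rewrite addeNy leNye.
  rewrite -ltNye => /ereal_sup_gt [y Sy yNy].
  have := H y Sy; rewrite addye ?gt_eqF // .
  by case: c {H} => [c| |] //= _; rewrite leey.
- by rewrite addNye leNye.
Qed.

Lemma sup_adde_le a S c : (forall s, S s -> s + a <= c) -> ereal_sup S + a <= c.
Proof. by move=> H; rewrite addeC; apply: adde_sup_le => s Ss; rewrite addeC; exact: H. Qed.

Lemma eresP a b : a + eres a b <= b.
Proof. by apply: adde_sup_le => s. Qed.

Lemma eres_ge a b l : a + l <= b -> l <= eres a b.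
Proof. by move=> H; apply: ereal_sup_ubound. Qed.

Lemma eres_le a b l : l <= eres a b -> a + l <= b.
Proof. by move=> H; apply: le_trans (eresP a b); exact: leeD2l. Qed.

Lemma eres_mono a b b' : b <= b' -> eres a b <= eres a b'.
Proof. by move=> H; apply: eres_ge; apply: le_trans (eresP a b) H. Qed.

End A.
Section B.
Context {R : realType}.
Implicit Types (a b c l : \bar R) (S : set (\bar R)).

Lemma bigmax_leP p (F : 'I_p -> \bar R) c :
  (forall i, F i <= c) -> \big[maxe/-oo]_(i < p) F i <= c.
Proof.
move=> H; elim/big_ind: _ => //; first exact: leNye.
by move=> x y hx hy; rewrite ge_max hx hy.
Qed.

Lemma le_bigmaxP p (F : 'I_p -> \bar R) j : F j <= \big[maxe/-oo]_(i < p) F i.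
Proof. by rewrite (bigD1 j) //= le_max lexx. Qed.

Lemma le_bigminP p (F : 'I_p -> \bar R) c :
  (forall i, c <= F i) -> c <= \big[mine/+oo]_(i < p) F i.
Proof.
move=> H; elim/big_ind: _ => //; first exact: leey.
by move=> x y hx hy; rewrite le_min hx hy.
Qed.

Lemma bigmin_leP p (F : 'I_p -> \bar R) j : \big[mine/+oo]_(i < p) F i <= F j.
Proof. by rewrite (bigD1 j) //= ge_min lexx. Qed.

Lemma adde_bigmax_le a p (F : 'I_p -> \bar R) c :
  (forall i, a + F i <= c) -> a + \big[maxe/-oo]_(i < p) F i <= c.
Proof.
move=> H; elim/big_ind: _ => //; first by rewrite addeNy leNye.
move=> x y hx hy; rewrite /Order.max; case: ifP => _ //.
Qed.

Lemma le_addc_sub a b (c : R) : a <= b + c%:E -> a - c%:E <= b.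
Proof. by move=> h; rewrite leeBlDr. Qed.

Lemma le_sub_addc a b (c : R) : a - c%:E <= b -> a <= b + c%:E.
Proof. by rewrite leeBlDr. Qed.

Lemma eres_shift a b b' (c : R) : b <= b' + c%:E -> eres a b <= eres a b' + c%:E.
Proof.
move=> h; apply: le_sub_addc; apply: eres_ge.
rewrite addeA; apply: le_addc_sub; apply: le_trans h; exact: eresP.
Qed.

End B.

Section Ops.
Context {R : realType} {n : nat} (X : set 'rV[R]_n).

Definition close (c : R) (u v : 'rV[R]_n -> \bar R) :=
  forall x, X x -> u x <= v x + c%:E /\ v x <= u x + c%:E.

Definition leo (c : R) (u v : 'rV[R]_n -> \bar R) :=
  forall x, X x -> u x <= v x + c%:E.

Lemma closeP c u v : close c u v <-> leo c u v /\ leo c v u.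
Proof.
split; first by move=> h; split => x Xx; have [] := h x Xx.
by move=> [h1 h2] x Xx; split; [exact: h1|exact: h2].
Qed.

Lemma sup_dist_ge0 u v : 0 <= sup_dist X u v.
Proof.
by apply: le_ereal_inf_tmp => _ [l [l0 _] <-]; rewrite lee_fin.
Qed.

Lemma sup_dist_le c u v : (0 <= c)%R -> close c u v -> sup_dist X u v <= c%:E.
Proof.
move=> c0 h; apply: ereal_inf_lbound; exists c => //; split => // x Xx.
have [h1 h2] := h x Xx; split => //; exact: le_addc_sub.
Qed.

Lemma sup_dist_adh u v (e : R) : (0 < e)%R -> sup_dist X u v \is a fin_num ->
  exists c, [/\ (0 <= c)%R, close c u v & c%:E < sup_dist X u v + e%:E].
Proof.
move=> e0 fin; have [_ [l [l0 hl] <-] hlt] := lb_ereal_inf_adherent e0 fin.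
exists l; split => // x Xx; have [h1 h2] := hl x Xx; split => //.
exact: le_sub_addc.
Qed.

Lemma close_trans c1 c2 u v w : close c1 u v -> close c2 v w -> close (c1 + c2) u w.
Proof.
move=> h1 h2 x Xx; have [a1 b1] := h1 x Xx; have [a2 b2] := h2 x Xx.
rewrite EFinD; split.
- by apply: le_trans a1 _; rewrite (addeC c1%:E) addeA; exact: leeD2r.
- by apply: le_trans b2 _; rewrite addeA; exact: leeD2r.
Qed.

Lemma close_ext c u u' v v' : (forall x, X x -> u x = u' x) -> (forall x, X x -> v x = v' x) ->
  close c u v -> close c u' v'.
Proof. by move=> hu hv h x Xx; rewrite -hu // -hv //; exact: h. Qed.

Variable p : nat.
Variable w : 'I_p -> 'rV[R]_n -> \bar R.

Lemma Wres_leo c u v : leo c u v -> forall i, Wres X w u i <= Wres X w v i + c%:E.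
Proof.
move=> h i; apply: le_sub_addc; apply: le_ereal_inf_tmp => _ [x Xx <-].
apply: eres_ge; rewrite addeA; apply: le_addc_sub; apply: le_trans (h x Xx).
apply: eres_le; apply: ereal_inf_lbound; by exists x.
Qed.

Lemma Wmap_leo c (lam mu : 'I_p -> \bar R) :
  (forall i, lam i <= mu i + c%:E) -> forall x, Wmap w lam x <= Wmap w mu x + c%:E.
Proof.
move=> h x; apply: bigmax_leP => i; apply: le_trans (leeD2l _ (h i)) _.
rewrite addeA; apply: leeD2r; exact: (le_bigmaxP (fun i => w i x + mu i)).
Qed.

Lemma PW_leo c u v : leo c u v -> forall x, PW X w u x <= PW X w v x + c%:E.
Proof. by move=> h; apply: Wmap_leo; exact: Wres_leo. Qed.

Variable q : nat.
Variable z : 'I_q -> 'rV[R]_n -> \bar R.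

Lemma mp_dot_leo c (y : 'rV[R]_n -> \bar R) u v : leo c u v -> mp_dot X y u <= mp_dot X y v + c%:E.
Proof.
move=> h; apply: ge_ereal_sup => _ [x Xx <-].
apply: le_trans (leeD2l _ (h x Xx)) _; rewrite addeA; apply: leeD2r.
by apply: ereal_sup_ubound; exists x.
Qed.

Lemma PmZ_leo c u v : leo c u v -> forall x, PmZ X z u x <= PmZ X z v x + c%:E.
Proof.
move=> h x; apply: le_sub_addc; apply: le_bigminP => j.
apply: le_addc_sub; apply: le_trans (bigmin_leP _ j) _.
by apply: eres_shift; exact: mp_dot_leo.
Qed.

Lemma PP_close c u v : close c u v -> close c (PW X w (PmZ X z u)) (PW X w (PmZ X z v)).
Proof.
move=> /closeP [h1 h2]; apply/closeP; split => x Xx; apply: PW_leo => y Xy;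
  apply: PmZ_leo => //.
Qed.

End Ops.
Section C.
Context {R : realType}.

Lemma sup_max_comm (T : Type) (S : set T) (F : T -> \bar R) p
  (G : 'I_p -> T -> \bar R) (lam : 'I_p -> \bar R) :
  ereal_sup [set F s + \big[maxe/-oo]_(k < p) (G k s + lam k) | s in S] =
  \big[maxe/-oo]_(k < p) (ereal_sup [set F s + G k s | s in S] + lam k).
Proof.
apply/le_anti/andP; split.
- apply: ge_ereal_sup => _ [s Ss <-]; apply: adde_bigmax_le => k.
  apply: le_trans (le_bigmaxP (fun k => ereal_sup [set F s + G k s | s in S] + lam k) k).
  rewrite addeA; apply: leeD2r; apply: ereal_sup_ubound; by exists s.
- apply: bigmax_leP => k; apply: sup_adde_le => _ [s Ss <-].
  rewrite -addeA; apply: le_trans (ereal_sup_ubound _); last by exists s.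
  apply: leeD2l; exact: (le_bigmaxP (fun k => G k s + lam k)).
Qed.

Variables (n m p q : nat) (X : set 'rV[R]_n) (U : set 'rV[R]_m)
  (l : 'rV[R]_n -> 'rV[R]_m -> R) (f : 'rV[R]_n -> 'rV[R]_m -> 'rV[R]_n)
  (w : 'I_p -> 'rV[R]_n -> \bar R) (z : 'I_q -> 'rV[R]_n -> \bar R).

Lemma Wres_PmZ g :
  Wres X w (PmZ X z g) = mp_res (fun j i => mp_dot X (z j) (w i)) (fun j => mp_dot X (z j) g).
Proof.
apply/funext => i; rewrite /mp_res; apply/le_anti/andP; split.
- apply: le_bigminP => j; apply: eres_ge.
  apply: sup_adde_le => _ [x Xx <-].
  rewrite -addeA; apply: eres_le.
  have h1 : Wres X w (PmZ X z g) i <= eres (w i x) (PmZ X z g x).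
    by apply: ereal_inf_lbound; exists x.
  have h2 := eres_le h1.
  apply: le_trans h2 _; exact: bigmin_leP.
- apply: le_ereal_inf_tmp => _ [x Xx <-]; apply: eres_ge.
  apply: le_bigminP => j; apply: eres_ge; rewrite addeA.
  have h := eres_le (bigmin_leP (fun j => eres (mp_dot X (z j) (w i)) (mp_dot X (z j) g)) j).
  apply: le_trans h; apply: leeD2r; apply: ereal_sup_ubound; by exists x.
Qed.

Lemma Sop_Wmap t (lam : 'I_p -> \bar R) :
  Sop X U l f t (Wmap w lam) = fun x0 => \big[maxe/-oo]_(k < p) (Sop X U l f t (w k) x0 + lam k).
Proof. by apply/funext => x0; rewrite /Sop /Wmap sup_max_comm. Qed.

Lemma dot_max j (h : 'I_p -> 'rV[R]_n -> \bar R) (lam : 'I_p -> \bar R) :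
  mp_dot X (z j) (fun x => \big[maxe/-oo]_(k < p) (h k x + lam k)) =
  \big[maxe/-oo]_(k < p) (mp_dot X (z j) (h k) + lam k).
Proof. by rewrite /mp_dot sup_max_comm. Qed.

Lemma vh_step delta phi k :
  Wmap w (mpfem_lambda X U l f delta phi w z k.+1) =
  PW X w (PmZ X z (Sop X U l f delta (Wmap w (mpfem_lambda X U l f delta phi w z k)))).
Proof.
rewrite /PW Wres_PmZ /=; congr (Wmap w (mp_res _ _)).
by apply/funext => j; rewrite Sop_Wmap dot_max.
Qed.

Lemma Sop_leo t c g g' : (0 <= t)%R -> leo X c g g' ->
  forall x0, Sop X U l f t g x0 <= Sop X U l f t g' x0 + c%:E.
Proof.
move=> t0 h x0; apply: ge_ereal_sup => _ [uxs adm <-].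
have Xt : X (uxs.2 t).
  by case: adm => _ [_ [hX _]]; apply: hX; rewrite /= in_itv /= t0 lexx.
apply: le_trans (leeD2l _ (h _ Xt)) _; rewrite addeA; apply: leeD2r.
by apply: ereal_sup_ubound; exists uxs.
Qed.

Lemma Sop_close t c g g' : (0 <= t)%R -> close X c g g' ->
  close X c (Sop X U l f t g) (Sop X U l f t g').
Proof.
move=> t0 /closeP [h1 h2]; apply/closeP; split => x _; exact: Sop_leo.
Qed.

Lemma Sop_U0 t g x0 : (0 <= t)%R -> (forall u, ~ U u) -> Sop X U l f t g x0 = -oo.
Proof.
move=> t0 hU; apply/ereal_sup_ninfty => y [uxs [hu _] _].
by exfalso; apply: (hU (uxs.1 0%R)); apply: hu; rewrite /= in_itv /= lexx t0.
Qed.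

End C.

Section SD.
Context {R : realType} {n : nat} (X : set 'rV[R]_n).

Lemma fin_sd u v : sup_dist X u v != +oo -> sup_dist X u v \is a fin_num.
Proof. by move=> h; rewrite ge0_fin_numE ?(sup_dist_ge0 X) // ltey. Qed.

Lemma sd_le u v u' v' : (forall c, (0 <= c)%R -> close X c u v -> close X c u' v') ->
  sup_dist X u' v' <= sup_dist X u v.
Proof.
move=> H; have [->|hne] := eqVneq (sup_dist X u v) +oo; first exact: leey.
apply/lee_addgt0Pr => e e0.
have [c [c0 hc hlt]] := sup_dist_adh e0 (fin_sd hne).
apply: le_trans (ltW hlt); apply: sup_dist_le => //; exact: H.
Qed.

Lemma sd_tri u v w : sup_dist X u w <= sup_dist X u v + sup_dist X v w.
Proof.
have [->|h1] := eqVneq (sup_dist X u v) +oo.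
  by rewrite addye ?leey // gt_eqF // (lt_le_trans _ (sup_dist_ge0 X _ _)) ?ltNyr.
have [->|h2] := eqVneq (sup_dist X v w) +oo.
  by rewrite addey ?leey // gt_eqF // (lt_le_trans _ (sup_dist_ge0 X _ _)) ?ltNyr.
apply/lee_addgt0Pr => e e0.
have e20 : (0 < e / 2)%R by rewrite divr_gt0.
have [c1 [c10 hc1 hlt1]] := sup_dist_adh e20 (fin_sd h1).
have [c2 [c20 hc2 hlt2]] := sup_dist_adh e20 (fin_sd h2).
apply: le_trans (sup_dist_le (addr_ge0 c10 c20) (close_trans hc1 hc2)) _.
have -> : e = (e / 2 + e / 2)%R by rewrite -splitr.
rewrite EFinD EFinD addeACA; apply: leeD; exact: ltW.
Qed.

End SD.
Import HBNNSimple.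

Section Transl.
Context {R : realType}.
Local Notation mu := (@lebesgue_measure R).

Lemma meas_shift (c : R) : measurable_fun [set: measurableTypeR R] (fun x : measurableTypeR R => (x : R) + c : measurableTypeR R)%R.
Proof. by apply: measurable_realfun.measurable_funD => //; exact: measurable_id. Qed.

Lemma itv_shift (a b c : R) : [set x : R | `]a, b]%classic (x + c)%R] = `](a - c)%R, (b - c)%R]%classic.
Proof.
apply/seteqP; split => x /=; rewrite !in_itv /= => /andP [h1 h2]; apply/andP; split.
- by rewrite ltrBlDr.
- by rewrite lerBrDr.
- by rewrite -ltrBlDr.
- by rewrite -lerBrDr.
Qed.

Section PF.
Variable c : R.
Definition spf : set (measurableTypeR R) -> \bar R := pushforward mu (fun x : measurableTypeR R => (x : R) + c)%R.
Let spf0 : spf set0 = 0.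
Proof. by rewrite /spf /pushforward preimage_set0 measure0. Qed.
Let spf_ge0 A : 0 <= spf A.
Proof. by rewrite /spf /pushforward. Qed.
Let spf_sigma_additive : semi_sigma_additive spf.
Proof.
move=> F mF tF mUF; rewrite /spf /pushforward preimage_bigcup.
apply: measure_semi_sigma_additive.
- by move=> k; rewrite -[X in measurable X]setTI; exact: meas_shift.
- apply/trivIsetP => /= i j _ _ ij; rewrite -preimage_setI.
  by move/trivIsetP : tF => /(_ _ _ _ _ ij) ->//; rewrite preimage_set0.
- by rewrite -preimage_bigcup -[X in measurable X]setTI; exact: meas_shift.
Qed.
HB.instance Definition _ := isMeasure.Build _ _ _ spf spf0 spf_ge0 spf_sigma_additive.
End PF.

Lemma lebesgue_shift (c : R) (A : set R) : measurable A -> mu [set x | A (x + c)%R] = mu A.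
Proof.
move=> mA.
have H : forall X, ocitv X -> mu X = spf c X.
  move=> _ [[a b] _ <-]; rewrite /spf /pushforward /=.
  rewrite (_ : (fun x => x + c)%R @^-1` _ = `](a - c)%R, (b - c)%R]%classic); last exact: itv_shift.
  rewrite !lebesgue_measure_itv /= !lte_fin ltrD2r.
  case: ifP => // _; rewrite -!EFinD; congr EFin; ring.
have := @lebesgue_measure_unique R (spf c) H A mA.
by rewrite /spf /pushforward => ->.
Qed.
End Transl.
Section NI.
Context {R : realType}.
Local Notation mu := (@lebesgue_measure R).
Local Notation mT := (measurableTypeR R).

Definition NI (G : R -> \bar R) := ereal_sup [set sintegral mu h |
  h in [set h : {nnsfun mT >-> R} | forall x, (h x)%:E <= G x]].

Lemma intE (D : set R) (F : R -> \bar R) :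
  \int[mu]_(s in D) F s = NI ((F \_ D)^\+) - NI ((F \_ D)^\-).
Proof. by []. Qed.

Section ShiftFun.
Variables (c : R) (h : {nnsfun mT >-> R}).
Definition hsh : mT -> R := fun x => h ((x : R) + c)%R.
Lemma hsh_meas : measurable_fun setT hsh.
Proof. exact: (measurableT_comp (measurable_funPT h) (meas_shift c)). Qed.
Lemma hsh_fin : finite_set (range hsh).
Proof.
apply: sub_finite_set (@fimfunP _ _ h) => _ [x _ <-]; by exists ((x : R) + c)%R.
Qed.
Lemma hsh_ge0 x : (0 <= hsh x)%R.
Proof. exact: fun_ge0. Qed.
HB.instance Definition _ := isMeasurableFun.Build _ _ _ _ hsh hsh_meas.
HB.instance Definition _ := FiniteImage.Build _ _ hsh hsh_fin.
HB.instance Definition _ := isNonNegFun.Build _ _ hsh hsh_ge0.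
Definition hsh_nnsfun : {nnsfun mT >-> R} := hsh.
Lemma sint_hsh : sintegral mu hsh = sintegral mu h.
Proof.
rewrite /sintegral; apply: eq_fsbigr => r _; congr (_ * _).
have mr : measurable (h @^-1` [set r]).
  by rewrite -[X in measurable X]setTI; apply: (measurable_funPT h) => //.
exact: (lebesgue_shift c mr).
Qed.
End ShiftFun.

Lemma NI_shift_le c H : NI (fun x => H (x + c)%R) <= NI H.
Proof.
apply: ge_ereal_sup => _ [h hle <-].
apply: ereal_sup_ubound; exists (hsh_nnsfun (- c)%R h); last exact: sint_hsh.
move=> x /=; have := hle (x - c)%R; by rewrite subrK.
Qed.

Lemma NI_shift c H : NI (fun x => H (x + c)%R) = NI H.
Proof.
apply/le_anti/andP; split; first exact: NI_shift_le.
have e : (fun x => H (x + - c + c)%R) = H by apply/funext => x; rewrite subrK.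
by have := NI_shift_le (- c)%R (fun y => H (y + c)%R); rewrite /= e.
Qed.

End NI.
Section NI2.
Context {R : realType}.
Local Notation mu := (@lebesgue_measure R).
Local Notation mT := (measurableTypeR R).

Lemma patchE' (G : R -> \bar R) (D : set R) x : (G \_ D) x = if `[< D x >] then G x else 0.
Proof. by []. Qed.

Lemma nnsfun_patch0 (h : {nnsfun mT >-> R}) (G : R -> \bar R) (D : set R) x :
  (forall x, (h x)%:E <= (G \_ D) x) -> ~ D x -> h x = 0%R.
Proof.
move=> hle nD; apply/eqP; rewrite eq_le fun_ge0 andbT -lee_fin.
by have := hle x; rewrite patchE' asboolF.
Qed.

Lemma notin_setP (A : set R) x : x \notin A -> ~ A x.
Proof. by move=> /negP h Ax; apply: h; rewrite in_setE. Qed.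

Lemma NI_ge0 (G : R -> \bar R) : (forall x, 0 <= G x) -> 0 <= NI G.
Proof.
move=> G0; apply: ereal_sup_ubound; exists nnsfun0 => //; last exact: sintegral0.
Qed.

Lemma NI_null (N : set R) (G : R -> \bar R) : measurable N -> mu N = 0 -> (forall x, 0 <= G x) ->
  NI (G \_ N) = 0.
Proof.
move=> mN N0 G0; apply/le_anti/andP; split; last first.
  apply: NI_ge0 => x; rewrite patchE'; case: ifP => //.
apply: ge_ereal_sup => _ [h hle <-].
rewrite /sintegral fsbig1 // => r _.
have [->|r0] := eqVneq r 0%R; first by rewrite mul0e.
suff -> : mu (h @^-1` [set r]) = 0 by rewrite mule0.
apply/eqP; rewrite eq_le measure_ge0 andbT -N0; apply: le_measure; rewrite ?inE //.
move=> x /= hx; apply: contrapT => nx.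
by move: r0; rewrite -hx (nnsfun_patch0 hle nx) eqxx.
Qed.

Lemma NI_union (A B : set R) (G : R -> \bar R) : measurable A -> measurable B -> A `&` B = set0 ->
  (forall x, 0 <= G x) -> NI (G \_ (A `|` B)) = NI (G \_ A) + NI (G \_ B).
Proof.
move=> mA mB AB G0; apply/le_anti/andP; split.
- apply: ge_ereal_sup => _ [h hle <-].
  pose h1 := mul_nnsfun h (@indic_nnsfun _ mT R A mA).
  pose h2 := mul_nnsfun h (@indic_nnsfun _ mT R B mB).
  have e : sintegral mu h = sintegral mu (h1 \+ h2)%R.
    apply: eq_sintegral => x /=; rewrite /h1 /h2 /= /measurable_realfun.mindic !indicE.
    have [Ax|nAx] := boolP (x \in A); have [Bx|nBx] := boolP (x \in B).
    + by exfalso; rewrite -[False]/(set0 x) -AB; split; rewrite -in_setE.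
    + by rewrite mulr1 mulr0 addr0.
    + by rewrite mulr1 mulr0 add0r.
    + rewrite !mulr0 addr0; apply: (nnsfun_patch0 hle) => -[]; rewrite -in_setE.
        by move=> ?; move/negP: nAx.
      by move=> ?; move/negP: nBx.
  rewrite e sintegralD; apply: leeD; apply: ereal_sup_ubound.
  + exists h1; last reflexivity.
    move=> x; rewrite /h1 /= /measurable_realfun.mindic indicE patchE'.
    have [Ax|nAx] := boolP (x \in A).
      rewrite mulr1 asboolT; last by rewrite -in_setE.
      by have := hle x; rewrite patchE' asboolT //; left; rewrite -in_setE.
    by rewrite mulr0 asboolF //; exact: notin_setP.
  + exists h2; last reflexivity.
    move=> x; rewrite /h2 /= /measurable_realfun.mindic indicE patchE'.
    have [Bx|nBx] := boolP (x \in B).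
      rewrite mulr1 asboolT; last by rewrite -in_setE.
      by have := hle x; rewrite patchE' asboolT //; right; rewrite -in_setE.
    by rewrite mulr0 asboolF //; exact: notin_setP.
- apply: sup_adde_le => _ [h1 hle1 <-]; apply: adde_sup_le => _ [h2 hle2 <-].
  rewrite -sintegralD; apply: ereal_sup_ubound; exists (add_nnsfun h1 h2) => // x.
  rewrite /= patchE'.
  case: (asboolP ((A `|` B) x)) => [[Ax|Bx]|nABx].
  + have nBx : ~ B x by move=> Bx; rewrite -[False]/(set0 x) -AB.
    rewrite (nnsfun_patch0 hle2 nBx) addr0.
    by have := hle1 x; rewrite patchE' asboolT.
  + have nAx : ~ A x by move=> Ax; rewrite -[False]/(set0 x) -AB.
    rewrite (nnsfun_patch0 hle1 nAx) add0r.
    by have := hle2 x; rewrite patchE' asboolT.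
  + rewrite (nnsfun_patch0 hle1 (fun Ax => nABx (or_introl Ax))).
    by rewrite (nnsfun_patch0 hle2 (fun Bx => nABx (or_intror Bx))) addr0.
Qed.

Lemma patch_pos (F : R -> \bar R) (D : set R) : (F \_ D)^\+ = (F^\+) \_ D.
Proof.
by apply/funext => x; rewrite funeposE !patchE' funeposE; case: ifP => //; rewrite maxxx.
Qed.

Lemma patch_neg (F : R -> \bar R) (D : set R) : (F \_ D)^\- = (F^\-) \_ D.
Proof.
by apply/funext => x; rewrite funenegE !patchE' funenegE; case: ifP => //; rewrite oppe0 maxxx.
Qed.

Lemma subeACA (a b c d : \bar R) : 0 <= a -> 0 <= b -> 0 <= c -> 0 <= d ->
  (a + b) - (c + d) = (a - c) + (b - d).
Proof.
case: a => [a| |]; case: b => [b| |]; case: c => [c| |]; case: d => [d| |] //=;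
  rewrite ?lee_fin => *; rewrite ?EFinN -?EFinD //; congr EFin; ring.
Qed.

Lemma I_null (N : set R) (F : R -> \bar R) : measurable N -> mu N = 0 ->
  \int[mu]_(s in N) F s = 0.
Proof.
move=> mN N0; rewrite intE patch_pos patch_neg !NI_null //; by rewrite oppe0 adde0.
Qed.

Lemma I_union (A B : set R) (F : R -> \bar R) : measurable A -> measurable B ->
  A `&` B = set0 ->
  \int[mu]_(s in A `|` B) F s = \int[mu]_(s in A) F s + \int[mu]_(s in B) F s.
Proof.
move=> mA mB AB; rewrite !intE !patch_pos !patch_neg !NI_union //;
  try (by move=> x; exact: funeneg_ge0); try (by move=> x; exact: funepos_ge0).
apply: subeACA; apply: NI_ge0 => x; rewrite patchE'; case: ifP => // _;
  try exact: funeneg_ge0; exact: funepos_ge0.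
Qed.

Lemma I_shift (D : set R) (F : R -> \bar R) (c : R) :
  \int[mu]_(s in [set s | D (s + c)%R]) F (s + c)%R = \int[mu]_(s in D) F s.
Proof.
rewrite !intE; congr (_ - _).
- rewrite -[RHS](NI_shift c); congr NI; apply/funext => x.
  by rewrite !patch_pos !patchE' !funeposE.
- rewrite -[RHS](NI_shift c); congr NI; apply/funext => x.
  by rewrite !patch_neg !patchE' !funenegE.
Qed.

End NI2.
Section E1.
Context {R : realType}.
Local Notation mu := (@lebesgue_measure R).

Lemma negl_shift (N : set R) (c : R) : mu.-negligible N -> mu.-negligible [set s | N (s + c)%R].
Proof.
move=> [M [mM M0 NM]]; exists [set s | M (s + c)%R]; split.
- have := (meas_shift c) measurableT M mM; by rewrite setTI.
- by rewrite lebesgue_shift.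
- by move=> s /= /NM.
Qed.

Lemma negl_point (a : R) : mu.-negligible [set a].
Proof.
exists `[a, a]%classic; split => //.
- by rewrite lebesgue_measure_itv /= lte_fin ltxx.
- by move=> s /= ->; rewrite in_itv /= lexx.
Qed.

Lemma ae_negl (P : R -> Prop) (N : set R) : (forall s, ~ P s -> N s) -> mu.-negligible N ->
  {ae mu, forall s, P s}.
Proof. by move=> H hN; apply: negligibleS hN => s /= /H. Qed.

Lemma negl_ae (P : R -> Prop) : {ae mu, forall s, P s} -> mu.-negligible (~` [set s | P s]).
Proof. by []. Qed.

Lemma is_derive_shiftc (V : normedModType R) (x : R -> V) (s c v : R) (d : V) :
  is_derive (s + c)%R v x d -> is_derive s v (fun r => x (r + c)%R) d.
Proof.
move=> [H1 H2].
have E : (fun h : R => h^-1 *: (((fun r => x (r + c)%R) \o shift s) (h *: v) - x (s + c)%R)) =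
         (fun h : R => h^-1 *: ((x \o shift (s + c)%R) (h *: v) - x (s + c)%R)).
  by apply/funext => h /=; rewrite addrA.
split; first by rewrite /derivable E.
by rewrite /derive E.
Qed.

Variable n : nat.

Lemma AC_restr (x : R -> 'rV[R]_n) (t T : R) : (t <= T)%R -> abs_cont_on 0%R T x -> abs_cont_on 0%R t x.
Proof.
move=> tT H e e0; have [d d0 Hd] := H e e0; exists d => // K al bl h1 h2 h3.
apply: Hd => // k kK; have [? [? ?]] := h1 k kK; split => //; split => //; exact: le_trans tT.
Qed.

Lemma AC_shift (x : R -> 'rV[R]_n) (a b : R) : (0 <= a)%R -> abs_cont_on 0%R (a + b)%R x ->
  abs_cont_on 0%R b (fun s => x (s + a)%R).
Proof.
move=> a0 H e e0; have [d d0 Hd] := H e e0; exists d => // K al bl h1 h2 h3.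
apply: (Hd K (fun k => al k + a)%R (fun k => bl k + a)%R).
- move=> k kK; have [? [? ?]] := h1 k kK; split; [|split]; lra.
- move=> i j iK jK ij; have [?|?] := h2 i j iK jK ij; [left|right]; lra.
- by under eq_bigr do rewrite opprD addrACA subrr addr0.
Qed.

Lemma minmax_facts (u v a : R) : (u <= v)%R ->
  [/\ (Num.min v a - Num.min u a <= v - u)%R, (Num.max v a - Num.max u a <= v - u)%R,
      (Num.min u a <= Num.min v a)%R & (Num.max u a <= Num.max v a)%R].
Proof.
move=> uv; rewrite /Num.min /Num.max.
by case: ifPn => h1; case: ifPn => h2; rewrite -?leNgt in h1 h2; split; lra.
Qed.

Lemma AC_concat (x1 x2 : R -> 'rV[R]_n) (a b : R) : (0 <= a)%R -> (0 <= b)%R ->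
  x2 0%R = x1 a -> abs_cont_on 0%R a x1 -> abs_cont_on 0%R b x2 ->
  abs_cont_on 0%R (a + b)%R (fun s => if (s <= a)%R then x1 s else x2 (s - a)%R).
Proof.
move=> a0 b0 e12 H1 H2 e e0.
have e20 : (0 < e / 2)%R by rewrite divr_gt0.
have [d1 d10 Hd1] := H1 _ e20; have [d2 d20 Hd2] := H2 _ e20.
exists (Num.min d1 d2); first by rewrite lt_min d10 d20.
move=> K al bl hI hD hS.
set xc := fun s => if (s <= a)%R then x1 s else x2 (s - a)%R.
pose al1 k := Num.min (al k) a; pose bl1 k := Num.min (bl k) a.
pose al2 k := (Num.max (al k) a - a)%R; pose bl2 k := (Num.max (bl k) a - a)%R.
have key s : xc s = (x1 (Num.min s a) + x2 (Num.max s a - a) - x1 a)%R.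
  rewrite /xc /Num.min /Num.max; case: ifPn => sa.
  - case: (ltP s a) => [_|sa']; first by rewrite subrr e12 addrK.
    have -> : s = a by apply/le_anti; rewrite sa sa'.
    by rewrite subrr e12 addrK.
  - have sa' : (a < s)%R by rewrite ltNge.
    rewrite (ltNge s a) (ltW sa') /=.
    by rewrite [RHS]addrAC subrr add0r.
have nle k : (k < K)%N -> (`|xc (bl k) - xc (al k)| <=
    `|x1 (bl1 k) - x1 (al1 k)| + `|x2 (bl2 k) - x2 (al2 k)|)%R.
  move=> kK; rewrite !key.
  set A := x1 (Num.min (bl k) a); set B := x2 _; set A' := x1 (Num.min (al k) a).
  set B' := x2 (Num.max (al k) a - a)%R; set C := x1 a.
  have -> : (A + B - C - (A' + B' - C) = (A - A') + (B - B'))%R.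
    by rewrite opprB addrA subrK opprD addrACA.
  exact: ler_normD.
have S1 : (\sum_(k < K) `|x1 (bl1 k) - x1 (al1 k)| < e / 2)%R.
  apply: Hd1.
  - move=> k kK; have [h0 [h1 h2]] := hI k kK.
    have [_ _ m1 _] := minmax_facts a h1.
    split; first by rewrite /al1 le_min h0.
    by split => //; rewrite /bl1 ge_min lexx orbT.
  - move=> i j iK jK ij; have [h|h] := hD i j iK jK ij; [left|right];
      by have [_ _ m1 _] := minmax_facts a h.
  - have hd : (Num.min d1 d2 <= d1)%R by rewrite ge_min lexx.
    apply: (le_lt_trans _ (lt_le_trans hS hd)).
    apply: ler_sum => k _; have [h0 [h1 h2]] := hI k (ltn_ord k).
    by have [m1 _ _ _] := minmax_facts a h1.
have S2 : (\sum_(k < K) `|x2 (bl2 k) - x2 (al2 k)| < e / 2)%R.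
  apply: Hd2.
  - move=> k kK; have [h0 [h1 h2]] := hI k kK.
    have [_ _ _ m1] := minmax_facts a h1.
    split; first by rewrite /al2 subr_ge0 le_max lexx orbT.
    split; first by rewrite /al2 /bl2 lerD2r.
    rewrite /bl2 lerBlDl /Num.max; case: ifPn => _; lra.
  - move=> i j iK jK ij; have [h|h] := hD i j iK jK ij; [left|right];
      by have [_ _ _ m1] := minmax_facts a h; rewrite lerD2r.
  - have hd : (Num.min d1 d2 <= d2)%R by rewrite ge_min lexx orbT.
    apply: (le_lt_trans _ (lt_le_trans hS hd)).
    apply: ler_sum => k _; have [h0 [h1 h2]] := hI k (ltn_ord k).
    have [_ m1 _ _] := minmax_facts a h1.
    by rewrite /al2 /bl2 opprB addrA subrK.
apply: (@le_lt_trans _ _ (\sum_(k < K) (`|x1 (bl1 k) - x1 (al1 k)| + `|x2 (bl2 k) - x2 (al2 k)|))%R).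
  by apply: ler_sum => k _; exact: (nle k (ltn_ord k)).
rewrite big_split /= (splitr e); exact: ltrD.
Qed.

End E1.
Section E2.
Context {R : realType} (n m : nat) (X : set 'rV[R]_n) (U : set 'rV[R]_m)
  (f : 'rV[R]_n -> 'rV[R]_m -> 'rV[R]_n).
Local Notation mu := (@lebesgue_measure R).

Lemma in0t (s t : R) : `[0%R, t]%classic s <-> (0 <= s /\ s <= t)%R.
Proof. by rewrite /= in_itv /=; split => [/andP[-> ->]|[-> ->]]. Qed.

Lemma meas_shiftR (E : set R) (c : R) : measurable_fun E (fun s : R => s + c)%R.
Proof.
by apply: measurable_realfun.measurable_funD => //; exact: measurable_id.
Qed.

Lemma adm_restr t T x0 (u : R -> 'rV[R]_m) (x : R -> 'rV[R]_n) : (t <= T)%R ->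
  admissible X U f T x0 u x -> admissible X U f t x0 u x.
Proof.
move=> tT [h1 [h2 [h3 [h4 [h5 h6]]]]]; split; [|split; [|split; [|split; [|split]]]] => //.
- by move=> s /in0t [s0 st]; apply: h1; apply/in0t; split => //; exact: le_trans tT.
- move=> i; apply: measurable_funS (h2 i) => // s /in0t [s0 st].
  by apply/in0t; split => //; exact: le_trans tT.
- by move=> s /in0t [s0 st]; apply: h3; apply/in0t; split => //; exact: le_trans tT.
- exact: AC_restr tT h4.
- apply: (ae_negl _ (negl_ae h5)) => s hs /= H; apply: hs => /in0t [s0 st]; apply: H.
  by apply/in0t; split => //; exact: le_trans tT.
Qed.

Lemma adm_tail a b x0 (u : R -> 'rV[R]_m) (x : R -> 'rV[R]_n) : (0 <= a)%R ->
  admissible X U f (a + b) x0 u x ->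
  admissible X U f b (x a) (fun s => u (s + a)%R) (fun s => x (s + a)%R).
Proof.
move=> a0 [h1 [h2 [h3 [h4 [h5 h6]]]]]; split; [|split; [|split; [|split; [|split]]]].
- by move=> s /in0t [s0 st]; apply: h1; apply/in0t; split; lra.
- move=> i.
  apply: (@measurable_comp _ _ _ _ _ _ `[0%R, (a + b)%R]%classic (fun s => u s ord0 i) _
            (fun s : R => s + a)%R) => //.
    by move=> _ [s /in0t [s0 st] <-]; apply/in0t; split; lra.
  exact: meas_shiftR.
- by move=> s /in0t [s0 st]; apply: h3; apply/in0t; split; lra.
- exact: AC_shift.
- have hN := negl_shift a (negl_ae h5).
  apply: (ae_negl _ hN) => s hs /= hP; apply: hs => /in0t [s0 st].
  apply: is_derive_shiftc; apply: hP; apply/in0t; split; lra.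
- by rewrite add0r.
Qed.

Lemma adm_concat a b x0 (u1 u2 : R -> 'rV[R]_m) (x1 x2 : R -> 'rV[R]_n) :
  (0 < a)%R -> (0 <= b)%R ->
  admissible X U f a x0 u1 x1 -> admissible X U f b (x1 a) u2 x2 ->
  admissible X U f (a + b) x0 (fun s => if (s <= a)%R then u1 s else u2 (s - a)%R)
                              (fun s => if (s <= a)%R then x1 s else x2 (s - a)%R).
Proof.
move=> a0 b0 [h1 [h2 [h3 [h4 [h5 h6]]]]] [k1 [k2 [k3 [k4 [k5 k6]]]]].
split; [|split; [|split; [|split; [|split]]]].
- move=> s /in0t [s0 st]; case: ifPn => sa.
    by apply: h1; apply/in0t.
  by apply: k1; apply/in0t; rewrite -ltNge in sa; split; lra.
- move=> i.
  have -> : (fun s => (if (s <= a)%R then u1 s else u2 (s - a)%R) ord0 i) =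
            (fun s => if (s <= a)%R then u1 s ord0 i else u2 (s - a)%R ord0 i).
    by apply/funext => s; case: ifP.
  apply: measurable_fun_if => //.
  + apply: measurable_realfun.measurable_fun_ler => //; exact: measurable_id.
  + apply: measurable_funS (h2 i) => // s [/in0t [s0 st]] /= sa.
    by apply/in0t; split.
  + apply: (@measurable_comp _ _ _ _ _ _ `[0%R, b]%classic (fun s => u2 s ord0 i) _
            (fun s : R => s + - a)%R) => //.
      move=> _ [s [/in0t [s0 st]] /= /negbT sa <-]; rewrite -ltNge in sa.
      by apply/in0t; split; lra.
    exact: meas_shiftR.
- move=> s /in0t [s0 st]; case: ifPn => sa.
    by apply: h3; apply/in0t.
  by apply: k3; apply/in0t; rewrite -ltNge in sa; split; lra.
- by apply: AC_concat => //; exact: ltW.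
- have hN1 := negl_ae h5.
  have hN2 := negl_shift (- a)%R (negl_ae k5).
  have hN := negligibleU (negligibleU hN1 hN2) (negl_point a).
  apply: (ae_negl _ hN) => s hs.
  have [sa|sa|sa] := ltgtP s a.
  + left; left => /= hP; apply: hs => /in0t [s0 st].
    rewrite (ltW sa).
    have H1 := hP (proj2 (in0t _ _) (conj s0 (ltW sa))).
    apply: (near_eq_is_derive _ H1).
    by move: (lt_nbhsl sa); apply: filterS => r ra; rewrite (ltW ra).
  + left; right => /= hP; apply: hs => /in0t [s0 st].
    rewrite leNgt sa /=.
    have H2 : is_derive (s + - a)%R 1%R x2 (f (x2 (s - a)%R) (u2 (s - a)%R)).
      by apply: hP; apply/in0t; split; lra.
    have H3 := is_derive_shiftc H2.
    apply: (near_eq_is_derive _ H3).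
    by move: (lt_nbhsr sa); apply: filterS => r ra /=; rewrite leNgt ra.
  + by right.
- by rewrite (ltW a0).
Qed.

End E2.
Section E3.
Context {R : realType} (n m : nat) (X : set 'rV[R]_n) (U : set 'rV[R]_m)
  (l : 'rV[R]_n -> 'rV[R]_m -> R) (f : 'rV[R]_n -> 'rV[R]_m -> 'rV[R]_n).
Local Notation mu := (@lebesgue_measure R).

Lemma J_oc (b : R) (G : R -> \bar R) : (0 <= b)%R ->
  \int[mu]_(s in `[0%R, b]) G s = \int[mu]_(s in `]0%R, b]) G s.
Proof.
move=> b0.
have -> : `[0%R, b]%classic = [set 0%R] `|` `]0%R, b]%classic.
  apply/seteqP; split => s /=.
    rewrite !in_itv /= => /andP [s0 sb]; have [->|ns] := eqVneq s 0%R; first by left.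
    by right; rewrite sb andbT lt_neqAle eq_sym ns s0.
  by rewrite !in_itv /= => -[->|/andP [s0 sb]]; rewrite ?lexx ?b0 // (ltW s0) sb.
rewrite I_union //.
- rewrite I_null ?add0e //.
  have := negl_point (0%R : R); move=> [N [mN N0 sN]].
  by apply/eqP; rewrite eq_le measure_ge0 andbT -N0 le_measure ?inE.
- by apply/seteqP; split => s //= [->]; rewrite in_itv /= ltxx.
Qed.

Lemma J_split (a b : R) (F : R -> \bar R) : (0 <= a)%R -> (0 <= b)%R ->
  \int[mu]_(s in `[0%R, (a + b)%R]) F s =
  \int[mu]_(s in `[0%R, a]) F s + \int[mu]_(s in `]0%R, b]) F (s + a)%R.
Proof.
move=> a0 b0.
have -> : `[0%R, (a + b)%R]%classic = `[0%R, a]%classic `|` `]a, (a + b)%R]%classic.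
  apply/seteqP; split => s /=; rewrite !in_itv /=.
    by move=> /andP [s0 sb]; case: (leP s a) => sa; [left|right]; apply/andP; split.
  by move=> [/andP [s0 sa]|/andP [sa sb]]; apply/andP; split => //; lra.
rewrite I_union //; last first.
  by apply/seteqP; split => s // [] /=; rewrite !in_itv /= => /andP [_ h1] /andP [h2 _]; lra.
congr (_ + _); rewrite -(I_shift _ _ a); congr (integral _ _ _).
by apply/seteqP; split => s /=; rewrite !in_itv /= => /andP [h1 h2]; apply/andP; split; lra.
Qed.

Lemma Sop_zero g x0 (u0 : 'rV[R]_m) : U u0 -> X x0 -> Sop X U l f 0%R g x0 = g x0.
Proof.
move=> Uu0 Xx0.
have J0 : forall F : R -> \bar R, \int[mu]_(s in `[0%R, 0%R]) F s = 0.
  move=> F; apply: I_null => //.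
  by rewrite lebesgue_measure_itv /= lte_fin ltxx.
apply/le_anti/andP; split.
- apply: ge_ereal_sup => _ [[u x] adm <-].
  by rewrite J0 add0e; have [_ [_ [_ [_ [_ /= h6]]]]] := adm; rewrite h6.
- apply: ereal_sup_ubound; exists (fun _ => u0, fun _ => x0); last by rewrite J0 add0e.
  split; [|split; [|split; [|split; [|split]]]] => //.
  + move=> e e0; exists 1%R => // K al bl _ _ _.
    by under eq_bigr do rewrite subrr normr0; rewrite big1.
  + apply: (ae_negl _ (negl_point 0%R)) => s hs; apply: contrapT => s0.
    apply: hs => /in0t [h1 h2]; exfalso; apply: s0; by apply/le_anti; rewrite h1 h2.
Qed.

Lemma DPP a b g x0 : (0 < a)%R -> (0 <= b)%R ->
  Sop X U l f a (Sop X U l f b g) x0 = Sop X U l f (a + b)%R g x0.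
Proof.
move=> a0 b0; have a0' := ltW a0; apply/le_anti/andP; split.
- apply: ge_ereal_sup => _ [[u1 x1] adm1 <-] /=.
  apply: adde_sup_le => _ [[u2 x2] adm2 <-] /=.
  have admc := adm_concat a0 b0 adm1 adm2.
  apply: ereal_sup_ubound; exists ((fun s => if (s <= a)%R then u1 s else u2 (s - a)%R),
                                   (fun s => if (s <= a)%R then x1 s else x2 (s - a)%R)).
    exact: admc.
  set uc := fun s => if (s <= a)%R then u1 s else u2 (s - a)%R.
  set xc := fun s => if (s <= a)%R then x1 s else x2 (s - a)%R.
  have e1 : \int[mu]_(s in `[0%R, a]) (l (xc s) (uc s))%:E =
            \int[mu]_(s in `[0%R, a]) (l (x1 s) (u1 s))%:E.
    apply: eq_integral => s; rewrite inE /= in_itv /= => /andP [_ sa].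
    by rewrite /xc /uc sa.
  have e2 : \int[mu]_(s in `]0%R, b]) (l (xc (s + a)%R) (uc (s + a)%R))%:E =
            \int[mu]_(s in `[0%R, b]) (l (x2 s) (u2 s))%:E.
    rewrite J_oc //; apply: eq_integral => s; rewrite inE /= in_itv /= => /andP [s0 sb].
    by rewrite /xc /uc leNgt ltrDr s0 /= addrK.
  have e3 : xc (a + b)%R = x2 b.
    rewrite /xc; case: ifPn => sab; last by rewrite (addrC a b) addrK.
    have -> : b = 0%R by apply/le_anti; rewrite b0 andbT -(lerD2l a) addr0.
    by rewrite addr0; case: adm2 => _ [_ [_ [_ [_ /= ->]]]].
  rewrite [(uc, xc).2]/= [(uc, xc).1]/=.
  by rewrite J_split // e1 e2 e3 [RHS]addeA.
- apply: ge_ereal_sup => _ [[u x] adm <-] /=.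
  have adm1 := adm_restr (ler_wpDr b0 (lexx a)) adm.
  have adm2 := adm_tail a0' adm.
  rewrite J_split // -addeA.
  apply: le_trans (_ : _ <= \int[mu]_(s in `[0%R, a]) (l (x s) (u s))%:E
                         + Sop X U l f b g (x a)) _.
    apply: leeD2l; apply: ereal_sup_ubound; exists (fun s => u (s + a)%R, fun s => x (s + a)%R).
      exact: adm2.
    by rewrite /= J_oc // [(b + a)%R]addrC.
  by apply: ereal_sup_ubound; exists (u, x).
Qed.

End E3.
Section Main.
Context {R : realType} (n m p q : nat)
  (X : set 'rV[R]_n) (U : set 'rV[R]_m)
  (l : 'rV[R]_n -> 'rV[R]_m -> R) (f : 'rV[R]_n -> 'rV[R]_m -> 'rV[R]_n)
  (w : 'I_p -> 'rV[R]_n -> \bar R) (z : 'I_q -> 'rV[R]_n -> \bar R).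

Lemma main_from (T : R) (phi : 'rV[R]_n -> \bar R) (N : nat) :
  (forall a b g, (0 < a)%R -> (0 <= b)%R ->
     Sop X U l f a (Sop X U l f b g) = Sop X U l f (a + b) g) ->
  ((exists u, U u) -> forall g x0, X x0 -> Sop X U l f 0 g x0 = g x0) ->
  (0 < T)%R -> (1 <= N)%N ->
  let delta := (T / N%:R)%R in
  let v := fun t : R => Sop X U l f t phi in
  let vhT := Wmap w (mpfem_lambda X U l f delta phi w z N) in
  sup_dist X vhT (v T) <=
    sup_dist X (PW X w (v 0%R)) (v 0%R)
    + \sum_(1 <= k < N.+1) sup_dist X (PW X w (PmZ X z (v (k%:R * delta)%R))) (v (k%:R * delta)%R).
Proof.
move=> DPP S0 T0 N1; cbv zeta.
set delta := (T / N%:R)%R.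
set v := fun t : R => Sop X U l f t phi.
rewrite -/(v T) -/(v 0%R).
have N0 : (0 < N%:R :> R)%R by rewrite ltr0n.
have d0 : (0 < delta)%R by rewrite /delta divr_gt0.
pose lam k := mpfem_lambda X U l f delta phi w z k.
pose vh k := Wmap w (lam k).
pose vv k := v (k%:R * delta)%R.
pose S := Sop X U l f delta.
pose P g := PW X w (PmZ X z g).
pose eps k := sup_dist X (P (vv k)) (vv k).
pose eps0 := sup_dist X (PW X w (v 0%R)) (v 0%R).
have step_vh k : vh k.+1 = P (S (vh k)) by rewrite /vh vh_step.
have step_vv k : vv k.+1 = S (vv k).
  rewrite /vv /v /S DPP //; last by rewrite mulr_ge0 // ltW.
  by rewrite -[k.+1]add1n natrD mulrDl mul1r.
have E k : sup_dist X (vh k.+1) (vv k.+1) <= sup_dist X (S (vh k)) (S (vv k)) + eps k.+1.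
  rewrite step_vh; apply: le_trans (sd_tri _ _ (P (vv k.+1)) _) _.
  apply: leeD2r; rewrite step_vv; apply: sd_le => c c0 h; exact: PP_close.
have F k : sup_dist X (S (vh k)) (S (vv k)) <= sup_dist X (vh k) (vv k).
  by apply: sd_le => c c0 h; apply: Sop_close => //; exact: ltW.
have B0 : sup_dist X (S (vh 0%N)) (S (vv 0%N)) <= eps0.
  have [[u0 Uu0]|nU] := pselect (exists u, U u).
    apply: le_trans (F 0%N) _; apply: sd_le => c c0 h.
    have vv0 : vv 0%N = v 0%R by rewrite /vv mul0r.
    rewrite vv0; apply: close_ext h => // x Xx.
    rewrite /vh /lam /= /PW; congr (Wmap w _); apply/funext => i.
    rewrite /Wres; congr ereal_inf; apply/seteqP; split => _ [y Xy <-]; exists y => //.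
      by rewrite /v S0 //; exists u0.
    by rewrite /v S0 //; exists u0.
  have nU' : forall u, ~ U u by move=> u Uu; apply: nU; exists u.
  apply: le_trans (sup_dist_ge0 X _ _); apply: (@sup_dist_le _ _ X 0%R) => // x Xx.
  by rewrite /S !Sop_U0 //; exact: ltW.
have A k : sup_dist X (S (vh k)) (S (vv k)) <= eps0 + \sum_(1 <= j < k.+1) eps j.
  elim: k => [|k IH]; first by rewrite big_geq // adde0.
  apply: le_trans (F _) _; apply: le_trans (E _) _.
  rewrite big_nat_recr //= addeA; exact: leeD2r.
have [N' eN] : exists N', N = N'.+1 by case: N N1 {delta v d0 N0 lam vh vv S P eps eps0 E F A B0 step_vv step_vh} => // N' _; exists N'.
have vT : v T = vv N by rewrite /vv /delta mulrC divfK // gt_eqF.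
rewrite vT -/(lam N) -/(vh N).
move: (E N') (A N'); rewrite -eN => E' A'.
apply: le_trans E' _.
rewrite [X in _ <= _ + X]big_nat_recr //= addeA; apply: leeD2r; exact: A'.
Qed.

End Main.
Unset Implicit Arguments.

Theorem lemma5p2 (R : realType) (n m p q : nat)
  (X : set 'rV[R]_n) (U : set 'rV[R]_m)
  (l : 'rV[R]_n -> 'rV[R]_m -> R) (f : 'rV[R]_n -> 'rV[R]_m -> 'rV[R]_n)
  (T : R) (phi : 'rV[R]_n -> \bar R)
  (w : 'I_p -> 'rV[R]_n -> \bar R) (z : 'I_q -> 'rV[R]_n -> \bar R)
  (N : nat) :
  (0 < T)%R ->
  (forall x, X x -> phi x != +oo) ->
  (forall i x, X x -> w i x != +oo) ->
  (forall j x, X x -> z j x != +oo) ->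
  (1 <= N)%N ->
  let delta := (T / N%:R)%R in
  let v := fun t : R => Sop X U l f t phi in
  let vhT := Wmap w (mpfem_lambda X U l f delta phi w z N) in
  sup_dist X vhT (v T) <=
    sup_dist X (PW X w (v 0%R)) (v 0%R)
    + \sum_(1 <= k < N.+1) sup_dist X (PW X w (PmZ X z (v (k%:R * delta)%R))) (v (k%:R * delta)%R).
Proof.
move=> T0 _ _ _ N1.
apply: main_from => //.
- by move=> a b g a0 b0; apply/funext => x0; exact: DPP.
- by move=> [u0 Uu0] g x0 Xx0; exact: (@Sop_zero _ n m X U l f g x0 u0 Uu0 Xx0).
Qed.
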